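(* Let $T=(\vec G,G,\prec,A)$ be a strictly simplicial twisted graph with edge set $E$. Then for every $\boldsymbol\theta\in\mathbb{R}^E$ respecting $\prec$ there is a set $B\subset\mathcal C(\prec)$ such that the system of strict linear inequalities $\widehat c\cdot\mathbf r>0$, $c\in A\cup B$, in the unknown $\mathbf r\in\mathbb{R}^E$, is a minimal insoluble system.
   Context: Signed sets on a finite set $E$: pairs $X=(X^+,X^-)$ of disjoint subsets, $X(e)=+1,-1,0$ according as $e\in X^+$, $e\in X^-$, or neither; support $\underline X=X^+\cup X^-$. Conformal: no $e$ with $X(e)=-Y(e)\ne0$; composition $(X\circ Y)(e)=X(e)$ if $X(e)\ne0$, else $Y(e)$. For a total order $<$ on $E$, $\mathcal C(<)=\{(\{e_1,e_3\},\{e_2\}),(\{e_2\},\{e_1,e_3\}):e_1<e_2<e_3\}$ (circuits of the rank 2 oriented matroid $\mathcal M(<)$; vectors are compositions of pairwise conformal families of circuits); for a partial order $\prec$, $\mathcal C(\prec)=\bigcap_{<\supseteq\prec}\mathcal C(<)$. For a directed graph $\vec G=(V,\vec E)$ (no loops, parallel or antiparallel edges), underlying simple graph $G=(V,E)$, a strong map $\mathcal M^*(\vec G)\to\mathcal M(<)$ means every signed minimal cut $(\{(u,w):u\in S,w\notin S\},\{(u,w):w\in S,u\notin S\})$ ($S$, $V\setminus S$ inducing connected subgraphs) is a vector of $\mathcal M(<)$; $C^*_v=(\{(u,v)\in\vec E\},\{(v,u)\in\vec E\})$. A twisted graph $T=(\vec G,G,\prec,A)$: $\prec$ a partial order on $E$,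 $G$ three-edge-connected, $A\subset\mathcal C(\prec)$, a strong map $\mathcal M^*(\vec G)\to\mathcal M(<)$ for every total $<\supseteq\prec$, and a partition $A=\bigsqcup_{v}A_v$ with members of $A_v$ pairwise conformal and composing to $C^*_v$. $\boldsymbol\theta\in\mathbb{R}^E$ respects $\prec$ if $0<\theta_e<180$ (degrees) and $\theta_e<\theta_f$ whenever $e\prec f$. For $c\in\mathcal C(\prec)$, $\widehat c\in\mathbb{R}^E$ has $\widehat c(e)=0$ for $e\notin\underline c$ and $\widehat c(e)=c(e)\sin(\theta_{e''}-\theta_{e'})$ if $\underline c=\{e,e',e''\}$ with $e'\prec e''$; $\Sigma(T)$ is the matrix with rows $\widehat a$, $a\in A$. A matrix with $r+1$ rows and $r$ columns is a simplex if its rows have a linear dependency with all coefficients positive and every row dependency is a multiple of it. $T$ is simplicial on $F$ if for every $\boldsymbol\theta$ respecting $\prec$ the submatrix of $\Sigma(T)$ on columns $F$ is a simplex; $T$ is strictly simplicial if it is simplicial on some $F$ with $E\setminus F$ totally ordered by $\prec$. A system $M\mathbf r>0$ is minimal insoluble if it has no solution but every system obtained by deleting at least one inequality has a solution. *)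

(* Defs.v *)
From HB Require Import structures.
From mathcomp Require Import all_boot all_order all_algebra.
From mathcomp Require Import reals trigo.
Set Implicit Arguments. Unset Strict Implicit. Unset Printing Implicit Defensive.
Import Order.TTheory GRing.Theory Num.Theory.

Section SignedSets.
Variable E : finType.

(* a signed set X = (X^+, X^-) *)
Definition sset := ({set E} * {set E})%type.

Definition supp (X : sset) : {set E} := X.1 :|: X.2.

Definition sgn (X : sset) (e : E) : int :=
  if e \in X.1 then 1%R else if e \in X.2 then (-1)%R else 0%R.

Definition conformal (X Y : sset) : bool :=
  [disjoint X.1 & Y.2] && [disjoint X.2 & Y.1].

(* (X o Y)(e) = X(e) if X(e) <> 0, else Y(e) *)
Definition compose (X Y : sset) : sset :=
  (X.1 :|: (Y.1 :\: supp X), X.2 :|: (Y.2 :\: supp X)).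

Definition sset0 : sset := (set0, set0).

Definition compose_seq (s : seq sset) : sset := foldr compose sset0 s.
End SignedSets.

Section Orders.
Variable E : finType.

Definition strict_porder (prec : rel E) : Prop :=
  irreflexive prec /\ transitive prec.

Definition total_ext (prec lt : rel E) : Prop :=
  [/\ irreflexive lt, transitive lt,
      (forall e f, e != f -> lt e f || lt f e)
    & (forall e f, prec e f -> lt e f)].

Definition circuit_tot (lt : rel E) (X : sset E) : Prop :=
  exists e1 e2 e3, [/\ lt e1 e2, lt e2 e3 &
     (X = ([set e1; e3], [set e2]) \/ X = ([set e2], [set e1; e3]))].

Definition circuit_po (prec : rel E) (X : sset E) : Prop :=
  forall lt, total_ext prec lt -> circuit_tot lt X.

Definition vector_tot (lt : rel E) (X : sset E) : Prop :=
  exists s : seq (sset E),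
    [/\ (forall c, c \in s -> circuit_tot lt c),
        (forall c d, c \in s -> d \in s -> conformal c d)
      & X = compose_seq s].
End Orders.

Section Graphs.
Variables (V E : finType) (src tgt : E -> V).
(* edge e is the directed edge (src e, tgt e); the underlying simple graph
   G = (V, E) has e joining src e and tgt e *)

Definition no_loops : Prop := forall e, src e != tgt e.

Definition no_parallel_antiparallel : Prop :=
  forall e f, ((src e == src f) && (tgt e == tgt f))
              || ((src e == tgt f) && (tgt e == src f)) -> e = f.

Definition adj_in (S : {set V}) (F : {set E}) : rel V :=
  fun u w => [exists e in F, [&& src e \in S, tgt e \in S &
     ((src e == u) && (tgt e == w)) || ((src e == w) && (tgt e == u))]].

Definition induces_connected (S : {set V}) : bool :=
  (S != set0) &&
  [forall u in S, forall w in S, connect (adj_in S setT) u w].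

Definition three_edge_connected : Prop :=
  forall F : {set E}, #|F| <= 2 ->
    forall u w, connect (adj_in setT (~: F)) u w.

Definition signed_cut (S : {set V}) : sset E :=
  ([set e | (src e \in S) && (tgt e \notin S)],
   [set e | (tgt e \in S) && (src e \notin S)]).

Definition cocirc (v : V) : sset E :=
  ([set e | tgt e == v], [set e | src e == v]).

(* strong map M*(G) -> M(<) : every signed minimal cut is a vector of M(<) *)
Definition strong_map (lt : rel E) : Prop :=
  forall S : {set V}, induces_connected S -> induces_connected (~: S) ->
    vector_tot lt (signed_cut S).

Definition twisted_graph (prec : rel E) (A : {set sset E}) : Prop :=
  no_loops /\ no_parallel_antiparallel /\ strict_porder prec /\
  three_edge_connected /\
  (forall a, a \in A -> circuit_po prec a) /\
  (forall lt, total_ext prec lt -> strong_map lt) /\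
  exists part : sset E -> V, forall v : V,
        (forall a b, a \in A -> b \in A -> part a = v -> part b = v ->
           conformal a b)
        /\ compose_seq (enum [set a in A | part a == v]) = cocirc v.
End Graphs.

Local Open Scope ring_scope.
Section Sigma.
Variables (R : realType) (E : finType).

Definition sin_deg (x : R) : R := sin (x * pi / 180).

Definition respects (prec : rel E) (theta : E -> R) : Prop :=
  (forall e, 0 < theta e < 180) /\ (forall e f, prec e f -> theta e < theta f).

(* hat c (e) = c(e) sin(theta_{e''} - theta_{e'}) where supp c = {e,e',e''}
   and e' prec e'' (the sum below has exactly that one term for c in C(prec)) *)
Definition hat (prec : rel E) (theta : E -> R) (c : sset E) (e : E) : R :=
  if e \in supp c then
    (sgn c e)%:~R *
    \sum_(e1 in supp c) \sum_(e2 in supp c)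
       (if [&& e1 != e, e2 != e & prec e1 e2]
        then sin_deg (theta e2 - theta e1) else 0)
  else 0.

Definition is_simplex (A : {set sset E}) (F : {set E}) (M : sset E -> E -> R)
  : Prop :=
  #|A| = (#|F| + 1)%N /\
  exists lam : sset E -> R,
    [/\ (forall a, a \in A -> 0 < lam a),
        (forall e, e \in F -> \sum_(a in A) lam a * M a e = 0)
      & (forall mu : sset E -> R,
           (forall e, e \in F -> \sum_(a in A) mu a * M a e = 0) ->
           exists k : R, forall a, a \in A -> mu a = k * lam a)].

Definition simplicial_on (prec : rel E) (A : {set sset E}) (F : {set E})
  : Prop :=
  forall theta : E -> R, respects prec theta -> is_simplex A F (hat prec theta).

Definition strictly_simplicial (prec : rel E) (A : {set sset E}) : Prop :=
  exists F : {set E}, simplicial_on prec A F /\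
    (forall e f, e \notin F -> f \notin F -> e != f -> prec e f || prec f e).

Definition soluble (I : {set sset E}) (M : sset E -> E -> R) : Prop :=
  exists r : E -> R, forall c, c \in I -> 0 < \sum_(e : E) M c e * r e.

Definition minimal_insoluble (I : {set sset E}) (M : sset E -> E -> R)
  : Prop :=
  ~ soluble I M /\ (forall J : {set sset E}, J \proper I -> soluble J M).
End Sigma.

(* Main.v *)
Require Import Defs.
From HB Require Import structures.
From mathcomp Require Import all_boot all_order all_algebra.
From mathcomp Require Import reals trigo.
From mathcomp Require Import ring lra.
Set Implicit Arguments. Unset Strict Implicit. Unset Printing Implicit Defensive.
Import Order.TTheory GRing.Theory Num.Theory.
Section Ord.
Variable E : finType.
Implicit Types p lt : rel E.

Definition rk p (e : E) : nat := #|[set x | p x e]|.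
Definition lin p : rel E := fun e f =>
  (rk p e < rk p f)%N || ((rk p e == rk p f) && (enum_rank e < enum_rank f)%N).

Lemma rk_lt p e f : strict_porder p -> p e f -> (rk p e < rk p f)%N.
Proof.
move=> [irr0 tr] pef; have irr : forall a, p a a = false := irr0; apply: proper_card; apply/properP; split.
  by apply/subsetP => x; rewrite !inE => pxe; exact: tr pxe pef.
by exists e; rewrite !inE ?irr.
Qed.

Lemma lin_ext p : strict_porder p -> total_ext p (lin p).
Proof.
move=> sp; split.
- by move=> e; rewrite /lin ltnn eqxx ltnn.
- move=> y x z; rewrite /lin => /orP[H1|/andP[/eqP H1 H2]] /orP[H3|/andP[/eqP H3 H4]].
  + by rewrite (ltn_trans H1 H3).
  + by rewrite -H3 H1.
  + by rewrite H1 H3.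
  + by rewrite H1 H3 eqxx (ltn_trans H2 H4) orbT.
- move=> e f nef; rewrite /lin.
  case: (ltngtP (rk p e) (rk p f)) => //= H.
  case: (ltngtP (enum_rank e) (enum_rank f)) => // /val_inj/enum_rank_inj H'.
  by rewrite H' eqxx in nef.
- by move=> e f pef; rewrite /lin (rk_lt sp pef).
Qed.

Lemma asym lt a b : irreflexive lt -> transitive lt -> lt a b -> lt b a -> False.
Proof. by move=> irr tr ab ba; have := tr _ _ _ ab ba; rewrite (irr a). Qed.

Definition below p x y z : rel E := fun a b =>
  p a b || (((a == x) || p a x) && [|| b == y, p y b, b == z | p z b]).

Lemma below_sp p x y z : strict_porder p -> x != y -> x != z ->
  ~~ p y x -> ~~ p z x -> strict_porder (below p x y z).
Proof.
move=> [irr0 tr] xy xz yx zx; have irr : forall a, p a a = false := irr0.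
split.
  move=> a; rewrite /below irr /=; apply/negP => /andP[/orP[/eqP->|ax]].
    by rewrite (negbTE yx) (negbTE zx) (negbTE xy) (negbTE xz).
  case/or4P => [/eqP ay|ya|/eqP az|za].
  - by move: ax; rewrite ay (negbTE yx).
  - by rewrite (tr _ _ _ ya ax) in yx.
  - by move: ax; rewrite az (negbTE zx).
  - by rewrite (tr _ _ _ za ax) in zx.
have tg : forall b c, p b c -> [|| b == y, p y b, b == z | p z b] ->
            [|| c == y, p y c, c == z | p z c].
  move=> b c bc /or4P [/eqP eb|yb|/eqP eb|zb].
  - by rewrite -eb bc orbT.
  - by rewrite (tr _ _ _ yb bc) orbT.
  - by rewrite -eb bc !orbT.
  - by rewrite (tr _ _ _ zb bc) !orbT.
have sr : forall a b, p a b -> ((b == x) || p b x) -> ((a == x) || p a x).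
  by move=> a b ab /orP[/eqP<-|bx]; rewrite ?ab ?(tr _ _ _ ab bx) orbT.
move=> b a c; rewrite /below => /orP[ab|/andP[ax bt]] /orP[bc|/andP[bx ct]].
- by rewrite (tr _ _ _ ab bc).
- by rewrite (sr _ _ ab bx) ct orbT.
- by rewrite ax (tg _ _ bc bt) orbT.
- by rewrite ax ct orbT.
Qed.

Lemma below_ext p x y z lt : total_ext (below p x y z) lt -> total_ext p lt.
Proof.
by case=> h1 h2 h3 h4; split => // e f pef; apply: h4; rewrite /below pef.
Qed.

Lemma flip_sp p : strict_porder p -> strict_porder (fun a b => p b a).
Proof. by case=> irr tr; split => // b a c ab bc; exact: tr bc ab. Qed.

Lemma flip_ext p lt : total_ext (fun a b => p b a) lt -> total_ext p (fun a b => lt b a).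
Proof.
case=> h1 h2 h3 h4; split => //.
- by move=> b a c ab bc; exact: h2 bc ab.
- by move=> e f ef; rewrite orbC; apply: h3.
- by move=> e f pef; apply: h4.
Qed.

Lemma exists_ext p : strict_porder p -> exists lt, total_ext p lt.
Proof. by move=> sp; exists (lin p); exact: lin_ext. Qed.

Lemma ext_below p x y z : strict_porder p -> x != y -> x != z ->
  ~~ p y x -> ~~ p z x -> exists lt, [/\ total_ext p lt, lt x y & lt x z].
Proof.
move=> sp xy xz yx zx.
have sp' := below_sp sp xy xz yx zx.
have ext := lin_ext sp'.
exists (lin (below p x y z)); split.
- exact: below_ext ext.
- by case: ext => _ _ _ h; apply: h; rewrite /below eqxx eqxx orbT.
- by case: ext => _ _ _ h; apply: h; rewrite /below eqxx eqxx !orbT.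
Qed.

Lemma ext_above p x y z : strict_porder p -> x != y -> x != z ->
  ~~ p x y -> ~~ p x z -> exists lt, [/\ total_ext p lt, lt y x & lt z x].
Proof.
move=> sp xy xz yx zx.
have [lt [ext h1 h2]] := ext_below (flip_sp sp) xy xz yx zx.
by exists (fun a b => lt b a); split => //; exact: flip_ext.
Qed.

End Ord.
Section Circ.
Variable E : finType.
Implicit Types p lt : rel E.

Lemma pair_single (a b c : E) : [set a; b] = [set c] -> a = c /\ b = c.
Proof.
move=> H; have : a \in [set c] by rewrite -H !inE eqxx.
have : b \in [set c] by rewrite -H !inE eqxx orbT.
by rewrite !inE => /eqP -> /eqP ->.
Qed.

Lemma mid_between p lt (c : sset E) e1 e2 e3 : total_ext p lt -> circuit_tot lt c ->
  (c = ([set e1; e3], [set e2]) \/ c = ([set e2], [set e1; e3])) ->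
  exists f1 f3, [/\ lt f1 e2, lt e2 f3, f1 \in [set e1; e3] & f3 \in [set e1; e3]].
Proof.
case=> irr tr _ _ [g1 [g2 [g3 [l12 l23 Hg]]]] He.
have l13 := tr _ _ _ l12 l23.
have ne13 : g1 != g3 by apply/eqP => E13; rewrite E13 (irr g3) in l13.
case: Hg => -> in He; case: He => [[H1 H2]|[H1 H2]].
- have Eg := set1_inj H2; exists g1, g3; rewrite -Eg; split => //; by rewrite -H1 !inE eqxx ?orbT.
- by case: (pair_single H1) => Ea Eb; move: l13; rewrite Ea Eb (irr e2).
- by case: (pair_single H2) => Ea Eb; move: l13; rewrite Ea Eb (irr e2).
- have Eg := set1_inj H1; exists g1, g3; rewrite -Eg; split => //; by rewrite -H2 !inE eqxx ?orbT.
Qed.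

Lemma circ_struct p (c : sset E) : strict_porder p -> circuit_po p c ->
  exists x y z, [/\ p x y, p y z &
    (c = ([set x; z], [set y]) \/ c = ([set y], [set x; z]))].
Proof.
move=> sp cpo.
have [irr tr] := sp.
have ext0 := lin_ext sp.
have [e1 [e2 [e3 [l12 l23 He]]]] := cpo _ ext0.
case: (ext0) => irr0 tr0 _ sub0.
have n12 : e2 != e1 by apply/eqP => E12; rewrite E12 (irr0 e1) in l12.
have n23 : e2 != e3 by apply/eqP => E23; rewrite E23 (irr0 e3) in l23.
have A1 : p e1 e2 || p e3 e2.
  apply/negPn/negP; rewrite negb_or => /andP[h1 h3].
  have [lt [ext h2 h4]] := ext_below sp n12 n23 h1 h3.
  have [f1 [f3 [lf _ f1in _]]] := mid_between ext (cpo _ ext) He.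
  case: ext => irr' tr' _ _.
  move: f1in; rewrite !inE => /orP[/eqP Ef|/eqP Ef]; rewrite Ef in lf.
  - exact: asym irr' tr' lf h2.
  - exact: asym irr' tr' lf h4.
have A2 : p e2 e1 || p e2 e3.
  apply/negPn/negP; rewrite negb_or => /andP[h1 h3].
  have [lt [ext h2 h4]] := ext_above sp n12 n23 h1 h3.
  have [f1 [f3 [_ lf _ f3in]]] := mid_between ext (cpo _ ext) He.
  case: ext => irr' tr' _ _.
  move: f3in; rewrite !inE => /orP[/eqP Ef|/eqP Ef]; rewrite Ef in lf.
  - exact: asym irr' tr' lf h2.
  - exact: asym irr' tr' lf h4.
have p12 : p e1 e2.
  case/orP: A1 => // h; exfalso; exact: asym irr0 tr0 l23 (sub0 _ _ h).
have p23 : p e2 e3.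
  case/orP: A2 => // h; exfalso; exact: asym irr0 tr0 l12 (sub0 _ _ h).
by exists e1, e2, e3.
Qed.

Lemma sorted_circ p x y z : p x y -> p y z ->
  circuit_po p ([set x; z], [set y]) /\ circuit_po p ([set y], [set x; z]).
Proof.
move=> pxy pyz; split => lt [_ _ _ h]; exists x, y, z; split; auto.
Qed.
End Circ.
Local Open Scope ring_scope.
Lemma indep_soluble (R : fieldType) (E S : finType) (J : {set S}) (M : S -> E -> R) :
  (forall nu : S -> R, (forall e, \sum_(c in J) nu c * M c e = 0) ->
     forall c, c \in J -> nu c = 0) ->
  exists r : E -> R, forall c, c \in J -> \sum_e M c e * r e = 1.
Proof.
move=> Hind.
pose n := #|J|.
pose Mx : 'M[R]_(n, #|E|) := \matrix_(i, j) M (enum_val i) (enum_val j).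
have Hfree : row_free Mx.
  rewrite -kermx_eq0; apply/eqP/row_matrixP => i.
  set v := row i (kermx Mx).
  have Hv : v *m Mx = 0 by apply/sub_kermxP; exact: row_sub.
  pose nu c := \sum_(k < n | enum_val k == c) v 0 k.
  have nuE : forall i, nu (enum_val i) = v 0 i.
    move=> k; rewrite /nu (big_pred1 k) // => k'.
    by apply/eqP/eqP => [/enum_val_inj|->].
  have Hdep : forall e, \sum_(c in J) nu c * M c e = 0.
    move=> e; rewrite (big_enum_val (A := mem J)) /=.
    have H := congr1 (fun A : 'M[R]_(1, #|E|) => A 0 (enum_rank e)) Hv.
    rewrite /= !mxE in H; apply: (etrans _ H).
    apply: eq_bigr => k _; by rewrite nuE ?mxE enum_rankK.
  rewrite row0; apply/rowP => j.
  by rewrite -nuE (Hind nu Hdep) ?enum_valP // !mxE.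
case/row_freeP: Hfree => B HB.
pose X := B *m const_mx 1 : 'M[R]_(#|E|, 1).
exists (fun e => X (enum_rank e) 0) => c cJ.
rewrite (reindex (@enum_val E predT)) /=; last by exact: onW_bij (enum_val_bij E).
have -> : c = enum_val (enum_rank_in cJ c) by rewrite enum_rankK_in.
set i := enum_rank_in cJ c.
have H : (Mx *m X) i 0 = 1 by rewrite /X mulmxA HB mul1mx !mxE.
rewrite -H mxE. apply: eq_bigr => j _. have E1 : enum_rank (enum_val j) = j := enum_valK j. congr (_ * _); first by rewrite mxE. exact: (f_equal (fun k => X k 0) E1).
Qed.
Lemma mi_of_dep (R : realType) (E : finType) (I : {set sset E})
  (M : sset E -> E -> R) (k : sset E -> R) :
  I != set0 -> (forall c, c \in I -> 0 < k c) ->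
  (forall e, \sum_(c in I) k c * M c e = 0) ->
  (forall nu : sset E -> R, (forall e, \sum_(c in I) nu c * M c e = 0) ->
     exists t, forall c, c \in I -> nu c = t * k c) ->
  minimal_insoluble I M.
Proof.
move=> I0 kpos kdep kuniq; split.
  case=> r Hr.
  case/set0Pn: I0 => c0 c0I.
  have : 0 < \sum_(c in I) k c * \sum_e M c e * r e.
    rewrite (bigD1 c0) //=; apply: ltr_pwDl.
      by apply: mulr_gt0; [exact: kpos | exact: Hr].
    by apply: sumr_ge0 => c /andP[cI _]; apply: mulr_ge0; apply: ltW;
      [exact: kpos | exact: Hr].
  have -> : \sum_(c in I) k c * \sum_e M c e * r e = 0.
    under eq_bigr do rewrite mulr_sumr.
    rewrite exchange_big /= big1 // => e _.
    by under eq_bigr do rewrite mulrA; rewrite -mulr_suml kdep mul0r.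
  by rewrite ltxx.
move=> J /properP [JI [c0 c0I c0J]].
have [r Hr] : exists r : E -> R, forall c, c \in J -> \sum_e M c e * r e = 1.
  apply: indep_soluble => nu Hnu.
  pose nu' c := if c \in J then nu c else 0.
  have [t Ht] : exists t, forall c, c \in I -> nu' c = t * k c.
    apply: kuniq => e; rewrite (big_setID J) /=.
    rewrite [X in _ + X]big1 ?addr0; last first.
      by move=> c /setDP [_ cJ]; rewrite /nu' /= (negbTE cJ) mul0r.
    have -> : I :&: J = J by apply/setIidPr.
    by rewrite -[RHS](Hnu e); apply: eq_bigr => c cJ; rewrite /nu' /= cJ.
  have t0 : t = 0.
    have := Ht c0 c0I; rewrite /nu' /= (negbTE c0J) => /esym/eqP.
    by rewrite mulf_eq0 (gt_eqF (kpos c0 c0I)) orbF => /eqP.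
  move=> c cJ; have := Ht c (subsetP JI c cJ); by rewrite /nu' /= cJ t0 mul0r.
by exists r => c cJ; rewrite Hr.
Qed.
Section Hat.
Variables (R : realType) (E : finType) (p : rel E) (th : E -> R).
Hypothesis sp : strict_porder p.

Definition S (b a : E) : R := sin_deg (th b - th a).

Definition hbase x y z (e : E) : R :=
  if e == x then S z y else if e == y then - S z x else if e == z then S y x else 0.

Lemma hat_formula x y z (c : sset E) (s : R) : p x y -> p y z ->
  (c = ([set x; z], [set y]) /\ s = 1) \/ (c = ([set y], [set x; z]) /\ s = -1) ->
  forall e, hat p th c e = s * hbase x y z e.
Proof.
case: sp => irr0 tr; have irr : forall a, p a a = false := irr0.
move=> pxy pyz Hc e.
have pxz := tr _ _ _ pxy pyz.
have pyx : p y x = false by apply/negP => h; have := tr _ _ _ pxy h; rewrite irr.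
have pzy : p z y = false by apply/negP => h; have := tr _ _ _ pyz h; rewrite irr.
have pzx : p z x = false by apply/negP => h; have := tr _ _ _ pxz h; rewrite irr.
have nxy : (x == y) = false by apply/negP => /eqP E1; rewrite E1 irr in pxy.
have nyz : (y == z) = false by apply/negP => /eqP E1; rewrite E1 irr in pyz.
have nxz : (x == z) = false by apply/negP => /eqP E1; rewrite E1 irr in pxz.
have nyx : (y == x) = false by rewrite eq_sym.
have nzy : (z == y) = false by rewrite eq_sym.
have nzx : (z == x) = false by rewrite eq_sym.
have Hs : supp c = x |: (y |: [set z]).
  apply/setP => f; case: Hc => [[-> _]|[-> _]]; rewrite /supp !inE;
    by case: (f == x); case: (f == y); case: (f == z).
have xn : x \notin y |: [set z] by rewrite !inE nxy nxz.
have yn : y \notin [set z] by rewrite !inE nyz.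
rewrite /hat Hs.
have Hsum : forall f, \sum_(e1 in x |: (y |: [set z])) \sum_(e2 in x |: (y |: [set z]))
    (if [&& e1 != f, e2 != f & p e1 e2] then sin_deg (th e2 - th e1) else 0) =
    (if [&& x != f & y != f] then S y x else 0) +
    (if [&& x != f & z != f] then S z x else 0) +
    (if [&& y != f & z != f] then S z y else 0).
  move=> f; rewrite !big_setU1 ?big_set1 //= !big_setU1 ?big_set1 //=.
  rewrite ?irr ?pxy ?pxz ?pyx ?pyz ?pzx ?pzy ?andbF ?andbT /S.
  case: (x != f); case: (y != f); case: (z != f) => /=;
    rewrite ?addr0 ?add0r ?addrA //.
rewrite Hsum !inE /hbase.
have m1 : ((-1 : int)%:~R : R) = -1 by rewrite mulrNz.
case: (e =P x) => [->|nx]; last case: (e =P y) => [->|ny]; last case: (e =P z) => [->|nz].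
- rewrite ?eqxx /= ?nyx ?nzx /=.
  by case: Hc => [[-> ->]|[-> ->]]; rewrite /sgn !inE eqxx ?nxy //= ?m1 ?add0r ?mulr1 ?mul1r.
- rewrite ?eqxx /= ?nyx ?nxy ?nzy /= ?orbT /=.
  by case: Hc => [[-> ->]|[-> ->]]; rewrite /sgn !inE eqxx ?nyx ?nyz //= ?m1 ?add0r ?addr0 ?mulN1r ?mulNr ?mul1r ?opprK.
- rewrite ?eqxx /= ?nzx ?nzy ?nxz ?nyz /= ?orbT /=.
  by case: Hc => [[-> ->]|[-> ->]]; rewrite /sgn !inE eqxx ?nzx ?nzy ?orbT //= ?m1 ?addr0 ?mulr1 ?mul1r.
- have ex : (e == x) = false by apply/eqP.
  have ey : (e == y) = false by apply/eqP.
  have ez : (e == z) = false by apply/eqP.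
  by rewrite /= mulr0.
Qed.

Definition phi (e : E) : R := th e * pi / 180.

Lemma S_phi b a : S b a = sin (phi b - phi a).
Proof. by rewrite /S /sin_deg /phi; congr sin; ring. Qed.

Lemma sum_hbase x y z (g : E -> R) : x != y -> y != z -> x != z ->
  \sum_e hbase x y z e * g e = S z y * g x - S z x * g y + S y x * g z.
Proof.
move=> nxy nyz nxz.
rewrite (bigD1 x) //= (bigD1 y) 1?eq_sym //= (bigD1 z) /=; last by rewrite eq_sym nxz eq_sym nyz.
rewrite big1; last first.
  move=> e /andP[/andP[ex ey] ez]; rewrite /hbase (negbTE ex) (negbTE ey) (negbTE ez).
  by rewrite mul0r.
rewrite /hbase eqxx (eq_sym y x) (negbTE nxy) eqxx (eq_sym z x) (negbTE nxz).
rewrite (eq_sym z y) (negbTE nyz) eqxx addr0 addrA mulNr.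
by [].
Qed.

Lemma trig_cos a b c :
  sin (c - b) * cos a - sin (c - a) * cos b + sin (b - a) * cos c = 0 :> R.
Proof. rewrite !sinB; ring. Qed.

Lemma trig_sin a b c :
  sin (c - b) * sin a - sin (c - a) * sin b + sin (b - a) * sin c = 0 :> R.
Proof. rewrite !sinB; ring. Qed.

Lemma dep_hbase x y z : x != y -> y != z -> x != z ->
  \sum_e hbase x y z e * cos (phi e) = 0 /\ \sum_e hbase x y z e * sin (phi e) = 0.
Proof.
move=> nxy nyz nxz; rewrite !sum_hbase // !S_phi; split.
  exact: trig_cos.
exact: trig_sin.
Qed.

Hypothesis resp : respects p th.

Lemma S_gt0 a b : p a b -> 0 < S b a.
Proof.
move=> pab; case: resp => rng mono.
have := mono _ _ pab; have := rng a; have := rng b.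
move=> /andP[b0 b1] /andP[a0 a1] ab.
rewrite /S /sin_deg; apply: sin_gt0_pi.
have pi0 := pi_gt0 R.
apply/andP; split.
  apply: divr_gt0; last by [].
  by apply: mulr_gt0 => //; rewrite subr_gt0.
rewrite ltr_pdivrMr //; rewrite mulrC ltr_pM2l //; lra.
Qed.


Lemma hat_struct (c : sset E) : circuit_po p c ->
  exists x y z (s : R), [/\ p x y, p y z, s = 1 \/ s = -1,
     supp c = x |: (y |: [set z]) & forall e, hat p th c e = s * hbase x y z e].
Proof.
move=> cpo; have [x [y [z [pxy pyz Hc]]]] := circ_struct sp cpo.
case: Hc => Hc.
- exists x, y, z, 1; split => //; first by left.
  + by rewrite Hc /supp; apply/setP => f; rewrite !inE;
      case: (f == x); case: (f == y); case: (f == z).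
  + by apply: hat_formula => //; left.
- exists x, y, z, (-1); split => //; first by right.
  + by rewrite Hc /supp; apply/setP => f; rewrite !inE;
      case: (f == x); case: (f == y); case: (f == z).
  + by apply: hat_formula => //; right.
Qed.

Lemma sp_neq x y : p x y -> x != y.
Proof. by case: sp => irr _ pxy; apply/eqP => E1; rewrite E1 irr in pxy. Qed.

Lemma dep_circ (c : sset E) : circuit_po p c ->
  \sum_e hat p th c e * cos (phi e) = 0 /\ \sum_e hat p th c e * sin (phi e) = 0.
Proof.
move=> cpo; have [x [y [z [s [pxy pyz _ _ Hh]]]]] := hat_struct cpo.
have pxz : p x z by case: sp => _ tr; exact: tr pxy pyz.
have [D1 D2] := dep_hbase (sp_neq pxy) (sp_neq pyz) (sp_neq pxz).
split.
  under eq_bigr do rewrite Hh -mulrA.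
  by rewrite -mulr_sumr D1 mulr0.
under eq_bigr do rewrite Hh -mulrA.
by rewrite -mulr_sumr D2 mulr0.
Qed.

Lemma hat_nz (c : sset E) e : circuit_po p c -> e \in supp c -> hat p th c e != 0.
Proof.
move=> cpo; have [x [y [z [s [pxy pyz hs -> Hh]]]]] := hat_struct cpo.
have pxz : p x z by case: sp => _ tr; exact: tr pxy pyz.
have s0 : s != 0 by case: hs => ->; rewrite ?oppr_eq0 oner_eq0.
rewrite Hh mulf_eq0 negb_or s0 /= /hbase !inE.
case/or3P => /eqP ->; rewrite ?eqxx.
- by rewrite gt_eqF // S_gt0.
- by rewrite (eq_sym y x) (negbTE (sp_neq pxy)) oppr_eq0 gt_eqF // S_gt0.
- by rewrite (eq_sym z x) (negbTE (sp_neq pxz)) (eq_sym z y) (negbTE (sp_neq pyz)) gt_eqF // S_gt0.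
Qed.

Lemma hat_out (c : sset E) e : e \notin supp c -> hat p th c e = 0.
Proof. by rewrite /hat => /negbTE ->. Qed.

Lemma one_vec (D : R) a : D * cos a = 0 -> D * sin a = 0 -> D = 0.
Proof.
move=> h1 h2; rewrite -[D]mulr1 -(cos2Dsin2 a).
transitivity (cos a * (D * cos a) + sin a * (D * sin a)); first by ring.
by rewrite h1 h2 !mulr0 addr0.
Qed.

Lemma two_vec (D1 D2 a b : R) : sin (b - a) != 0 ->
  D1 * cos a + D2 * cos b = 0 -> D1 * sin a + D2 * sin b = 0 -> D1 = 0 /\ D2 = 0.
Proof.
move=> sn h1 h2.
have k1 : D1 * sin (b - a) = 0.
  transitivity (sin b * (D1 * cos a + D2 * cos b) - cos b * (D1 * sin a + D2 * sin b)).
    by rewrite sinB; ring.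
  by rewrite h1 h2 !mulr0 subr0.
have k2 : D2 * sin (b - a) = 0.
  transitivity (cos a * (D1 * sin a + D2 * sin b) - sin a * (D1 * cos a + D2 * cos b)).
    by rewrite sinB; ring.
  by rewrite h1 h2 !mulr0 subr0.
by split; [move/eqP: k1 | move/eqP: k2]; rewrite mulf_eq0 (negbTE sn) orbF => /eqP.
Qed.

Lemma swap_props (c : sset E) : circuit_po p c ->
  [/\ circuit_po p (c.2, c.1), (forall e, hat p th (c.2, c.1) e = - hat p th c e),
      supp (c.2, c.1) = supp c & c != (c.2, c.1)].
Proof.
move=> cpo; have [x [y [z [pxy pyz Hc]]]] := circ_struct sp cpo.
have [C1 C2] := sorted_circ pxy pyz.
have nxy := sp_neq pxy.
have ns : ([set x; z] == [set y]) = false.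
  by apply/negP => /eqP /pair_single [E1 _]; rewrite E1 eqxx in nxy.
have h1 : forall e, hat p th ([set x; z], [set y]) e = hbase x y z e.
  by move=> e; rewrite (hat_formula (s := 1) pxy pyz) ?mul1r //; left.
have h2 : forall e, hat p th ([set y], [set x; z]) e = - hbase x y z e.
  by move=> e; rewrite (hat_formula (s := -1) pxy pyz) ?mulN1r //; right.
case: Hc => -> /=; split => //.
- by move=> e; rewrite h1 h2.
- by rewrite /supp setUC.
- by apply/negP => /eqP [E1 _]; move: ns; rewrite E1 eqxx.
- by move=> e; rewrite h1 h2 opprK.
- by rewrite /supp setUC.
- by apply/negP => /eqP [E1 _]; move: ns; rewrite -E1 eqxx.
Qed.

Lemma sum_dep (T : finType) (I0 : {set T}) (f : T -> R) (r : T -> sset E) (g : R -> R) :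
  (g = cos \/ g = sin) -> (forall i, i \in I0 -> circuit_po p (r i)) ->
  \sum_e (\sum_(i in I0) f i * hat p th (r i) e) * g (phi e) = 0.
Proof.
move=> hg Hr.
under eq_bigr do rewrite mulr_suml.
rewrite exchange_big /= big1 // => i iI.
under eq_bigr do rewrite -mulrA.
rewrite -mulr_sumr; have [D1 D2] := dep_circ (Hr i iI).
by case: hg => ->; rewrite ?D1 ?D2 mulr0.
Qed.

Local Notation h := (hat p th).

Lemma main_aux (A : {set sset E}) (F : {set E}) :
  (forall a, a \in A -> circuit_po p a) ->
  is_simplex A F (hat p th) ->
  (forall e f, e \notin F -> f \notin F -> e != f -> p e f || p f e) ->
  exists B : {set sset E}, (forall b, b \in B -> circuit_po p b) /\
    minimal_insoluble (A :|: B) (hat p th).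
Proof.
move=> Acirc [HA [lam [lpos ldep luniq]]] Htot.
have A0 : A != set0 by rewrite -card_gt0 HA addn1.
case: (boolP (F == set0)) => [/eqP F0 | Fn0].
  have /cards1P [a Aa] : #|A| == 1%N by rewrite HA F0 cards0.
  have aA : a \in A by rewrite Aa set11.
  have [C1 C2 C3 C4] := swap_props (Acirc a aA).
  exists [set (a.2, a.1)]; split; first by move=> b; rewrite inE => /eqP ->.
  have an : a \notin [set (a.2, a.1)] by rewrite inE.
  apply: (@mi_of_dep R E _ _ (fun _ => 1)).
  - by apply/set0Pn; exists a; rewrite !inE Aa set11.
  - by move=> c _; exact: ltr01.
  - move=> e; rewrite Aa big_setU1 // big_set1 /= !mul1r.
    by rewrite C2 addrN.
  - move=> nu Hnu; exists (nu a) => c; rewrite Aa !inE mulr1 => /orP [/eqP ->//|/eqP ->].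
    have [x [y [z [s [_ _ _ Hs _]]]]] := hat_struct (Acirc a aA).
    have xs : x \in supp a by rewrite Hs !inE eqxx.
    have := Hnu x; rewrite Aa big_setU1 // big_set1 /= C2 mulrN => /eqP.
    rewrite -mulrBl mulf_eq0 (negbTE (hat_nz (Acirc a aA) xs)) orbF subr_eq0.
    by move/eqP.
have Anz : forall a, a \in A -> [exists e in F, h a e != 0].
  move=> a aA; case: (boolP [exists e in F, h a e != 0]) => // H0; exfalso.
  move: H0; rewrite negb_exists_in => /forall_inP H0.
  pose mu c : R := if c == a then 1 else 0.
  have [t Ht] : exists t, forall c, c \in A -> mu c = t * lam c.
    apply: luniq => e eF; rewrite (bigD1 a) //= big1 ?addr0.
      by rewrite /mu eqxx mul1r; apply/eqP; exact: negbNE (H0 e eF).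
    by move=> c /andP [_ ca]; rewrite /mu (negbTE ca) mul0r.
  have /set0Pn [a' /setD1P [a'a a'A]] : A :\ a != set0.
    rewrite -card_gt0; have := cardsD1 a A; rewrite aA HA add1n addn1 => /eqP.
    by rewrite eqSS => /eqP <-; rewrite card_gt0.
  have := Ht a' a'A; rewrite /mu (negbTE a'a) => /esym/eqP.
  rewrite mulf_eq0 (gt_eqF (lpos a' a'A)) orbF => /eqP t0.
  by have := Ht a aA; rewrite /mu eqxx t0 mul0r => /eqP; rewrite oner_eq0.
have [pp [qq [Hpq Hpq2 Hpq3]]] : exists pp qq : E, [/\ pp = qq \/ p pp qq,
    pp = qq -> forall e, e \notin F -> e = pp & pp != qq -> (pp \notin F) && (qq \notin F)].
  case: (boolP [exists x, exists y, [&& x \notin F, y \notin F & x != y]]).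
    case/existsP => x /existsP [y /and3P [xF yF xy]].
    case/orP: (Htot x y xF yF xy) => pxy.
      exists x, y; split => //; [by right | by move=> exy; move: xy; rewrite exy eqxx
        | by rewrite xF yF].
    exists y, x; split => //; [by right | by move=> exy; move: xy; rewrite exy eqxx
        | by rewrite xF yF].
  move=> Hn.
  case: (boolP [exists x, x \notin F]).
    case/existsP => x xF; exists x, x; split => //; [by left | | by rewrite eqxx].
    move=> _ e eF; apply/eqP; apply/negPn/negP => ex.
    move/negP: Hn; apply; apply/existsP; exists e; apply/existsP; exists x.
    by rewrite eF xF ex.
  move=> Hn2; case/set0Pn: Fn0 => x _; exists x, x; split => //; [by left | | by rewrite eqxx].
  move=> _ e eF; exfalso; move/negP: Hn2; apply; apply/existsP; by exists e.
pose w e := \sum_(a in A) lam a * h a e.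
have wF : forall e, e \in F -> w e = 0 by move=> e eF; exact: ldep.
pose J := [set j | [&& j \notin F, j != pp, j != qq, pp != qq & w j != 0]].
pose tripP j (t : E * E * E) := [&& p t.1.1 t.1.2, p t.1.2 t.2 &
     t.1.1 |: (t.1.2 |: [set t.2]) == pp |: (qq |: [set j])].
have inJ : forall j, j \in J -> [&& j \notin F, j != pp, j != qq & pp != qq].
  by move=> j; rewrite inE => /and5P [-> -> -> -> _].
have trip : forall j, j \in J -> exists t, tripP j t.
  move=> j jJ; have /and4P [jF jp jq pq] := inJ j jJ.
  have /andP [pF qF] := Hpq3 pq.
  have ppq : p pp qq by case: Hpq => // E1; move: pq; rewrite E1 eqxx.
  case/orP: (Htot j pp jF pF jp) => h1.
    exists (j, pp, qq); rewrite /tripP /= h1 ppq /=.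
    apply/eqP/setP => f; rewrite !inE.
    by case: (f == j); case: (f == pp); case: (f == qq).
  case/orP: (Htot j qq jF qF jq) => h2.
    exists (pp, j, qq); rewrite /tripP /= h1 h2 /=.
    apply/eqP/setP => f; rewrite !inE.
    by case: (f == j); case: (f == pp); case: (f == qq).
  exists (pp, qq, j); rewrite /tripP /= ppq h2 /=.
  apply/eqP/setP => f; rewrite !inE.
  by case: (f == j); case: (f == pp); case: (f == qq).
pose tr j := odflt (pp, pp, pp) [pick t | tripP j t].
have trP : forall j, j \in J -> tripP j (tr j).
  move=> j jJ; rewrite /tr; case: pickP => [t //|H0] /=.
  by have [t Ht] := trip j jJ; rewrite H0 in Ht.
pose c j : sset E := ([set (tr j).1.1; (tr j).2], [set (tr j).1.2]).
have cprops : forall j, j \in J -> [/\ circuit_po p (c j),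
    supp (c j) = pp |: (qq |: [set j]) & j \in supp (c j)].
  move=> j jJ; have /and3P [pxy pyz /eqP Hs] := trP j jJ.
  have [C1 _] := sorted_circ pxy pyz.
  have Hsupp : supp (c j) = pp |: (qq |: [set j]).
    rewrite -Hs /supp /c; apply/setP => f; rewrite !inE.
    by case: (f == (tr j).1.1); case: (f == (tr j).1.2); case: (f == (tr j).2).
  by split => //; rewrite Hsupp !inE eqxx !orbT.
pose m0 j := - w j / h (c j) j.
pose b j := if 0 < m0 j then c j else ((c j).2, (c j).1).
pose m j := `|m0 j|.
have bprops : forall j, j \in J -> [/\ circuit_po p (b j),
    supp (b j) = pp |: (qq |: [set j]), 0 < m j &
    forall e, m j * h (b j) e = m0 j * h (c j) e].
  move=> j jJ; have [C1 C2 C3] := cprops j jJ.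
  have [S1 S2 S3 S4] := swap_props C1.
  have hnz := hat_nz C1 C3.
  have wj : w j != 0 by move: jJ; rewrite inE => /and5P[].
  have m0nz : m0 j != 0.
    by rewrite /m0 mulf_eq0 oppr_eq0 invr_eq0 negb_or wj hnz.
  rewrite /b /m; case: ifP => m0p.
  - split => //; first by rewrite normr_gt0.
    by move=> e; rewrite gtr0_norm.
  - split => //; [by rewrite S3 | by rewrite normr_gt0 |].
    move=> e; rewrite S2 ler0_norm ?mulrNN //.
    by rewrite leNgt m0p.
have bsupp_out : forall j e, j \in J -> e \notin pp |: (qq |: [set j]) -> h (b j) e = 0.
  move=> j e jJ eo; have [_ S _ _] := bprops j jJ; by apply: hat_out; rewrite S.
have priv : forall i j, i \in J -> j \in J -> i != j -> h (b i) j = 0.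
  move=> i j iJ jJ ij; apply: bsupp_out => //.
  have /and4P [_ jp jq _] := inJ j jJ.
  by rewrite !inE (negbTE jp) (negbTE jq) (eq_sym j i) (negbTE ij).
have onF : forall j e, j \in J -> e \in F -> h (b j) e = 0.
  move=> j e jJ eF; apply: bsupp_out => //.
  have /and4P [jF _ _ pq] := inJ j jJ; have /andP [pF qF] := Hpq3 pq.
  rewrite !inE; apply/negP.
  by case/or3P => /eqP E1; [move: pF | move: qF | move: jF]; rewrite -E1 eF.
have binj : {in J &, injective b}.
  move=> i j iJ jJ bij; apply/eqP; apply/negPn/negP => ij.
  have [_ Si _ _] := bprops i iJ; have [_ Sj _ _] := bprops j jJ.
  have /and4P [_ jp jq _] := inJ j jJ.
  have : j \in supp (b j) by rewrite Sj !inE eqxx !orbT.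
  rewrite -bij Si !inE (negbTE jp) (negbTE jq) /= => /eqP ji.
  by move: ij; rewrite ji eqxx.
have bnA : forall j, j \in J -> b j \notin A.
  move=> j jJ; apply/negP => bA; have /exists_inP [e eF] := Anz _ bA.
  by rewrite (onF j e jJ eF) eqxx.
have Hdec : forall (nu : sset E -> R) e, \sum_(c in A :|: b @: J) nu c * h c e =
    \sum_(a in A) nu a * h a e + \sum_(j in J) nu (b j) * h (b j) e.
  move=> nu e; rewrite (big_setID A) /=.
  have -> : (A :|: b @: J) :&: A = A by apply/setIidPr; exact: subsetUl.
  have -> : (A :|: b @: J) :\: A = b @: J.
    apply/setP => c'; rewrite !inE; case cA: (c' \in A) => /=; last by [].
    apply/esym/negP => /imsetP [j jJ cE]; move: (bnA j jJ); by rewrite -cE cA.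
  by rewrite (big_imset _ binj).
have colF : forall (g : E -> R) e, e \in F -> \sum_(j in J) g j * h (b j) e = 0.
  by move=> g e eF; rewrite big1 // => j jJ; rewrite onF ?mulr0.
have colJ : forall (g : E -> R) e, e \in J ->
    \sum_(j in J) g j * h (b j) e = g e * h (b e) e.
  move=> g e eJ; rewrite (bigD1 e) //= big1 ?addr0 // => j /andP [jJ je].
  by rewrite priv ?mulr0.
have colO : forall (g : E -> R) e, e \notin F -> e \notin J -> e != pp -> e != qq ->
    \sum_(j in J) g j * h (b j) e = 0.
  move=> g e eF eJ ep eq'; rewrite big1 // => j jJ; rewrite bsupp_out ?mulr0 //.
  rewrite !inE (negbTE ep) (negbTE eq') /=; apply/eqP => ej; move: eJ; by rewrite ej jJ.
pose D e := w e + \sum_(j in J) m j * h (b j) e.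
have D0 : forall e, e != pp -> e != qq -> D e = 0.
  move=> e ep eq'; rewrite /D.
  case: (boolP (e \in F)) => eF; first by rewrite wF // colF // addr0.
  case: (boolP (e \in J)) => eJ.
    rewrite colJ //; have [_ _ _ Hm] := bprops e eJ; rewrite Hm /m0.
    have [C1 _ C3] := cprops e eJ.
    by rewrite divfK ?addrN // hat_nz.
  have pq : pp != qq by apply/eqP => pq; move: ep; rewrite (Hpq2 pq e eF) eqxx.
  have we : w e = 0.
    apply/eqP; apply/negPn/negP => wne; move: eJ; by rewrite inE eF ep eq' pq wne.
  by rewrite we colO // addr0.
have Ddep : forall g, (g = cos \/ g = sin) -> \sum_e D e * g (phi e) = 0.
  move=> g hg; rewrite /D.
  under eq_bigr do rewrite mulrDl.
  rewrite big_split /=.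
  have S1 := @sum_dep _ A lam (fun c => c) g hg Acirc.
  have S2 := @sum_dep _ J m b g hg
    (fun j jJ => match bprops j jJ with And4 h1 _ _ _ => h1 end).
  rewrite /= in S1; rewrite /w S1 S2 addr0 //.
have Dz : forall e, D e = 0.
  have Dcos := Ddep cos (or_introl erefl).
  have Dsin := Ddep sin (or_intror erefl).
  case: Hpq => [Epq | ppq].
    have sum1 : forall g, \sum_e D e * g (phi e) = D pp * g (phi pp).
      move=> g; rewrite (bigD1 pp) //= big1 ?addr0 // => e ep.
      by rewrite D0 ?mul0r // -Epq.
    have Dp : D pp = 0.
      by apply: (@one_vec _ (phi pp)); rewrite -sum1.
    move=> e; case: (e =P pp) => [->|ep]; first exact: Dp.
    by apply: D0; apply/eqP => //; rewrite -Epq.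
  have npq := sp_neq ppq.
  have sum2 : forall g, \sum_e D e * g (phi e) = D pp * g (phi pp) + D qq * g (phi qq).
    move=> g; rewrite (bigD1 pp) //= (bigD1 qq) /=; last by rewrite eq_sym.
    rewrite big1 ?addr0 ?addrA // => e /andP [ep eq'].
    by rewrite D0 ?mul0r.
  have hsn : sin (phi qq - phi pp) != 0 by rewrite -S_phi gt_eqF // S_gt0.
  have h1 : D pp * cos (phi pp) + D qq * cos (phi qq) = 0 by rewrite -sum2.
  have h2 : D pp * sin (phi pp) + D qq * sin (phi qq) = 0 by rewrite -sum2.
  have [Dp Dq] := two_vec hsn h1 h2.
  move=> e; case: (e =P pp) => [->//|ep]; case: (e =P qq) => [->//|eq'].
  by apply: D0; apply/eqP.
pose kappa c : R := if c \in A then lam c else \sum_(j in J | b j == c) m j.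
have kb : forall j, j \in J -> kappa (b j) = m j.
  move=> j jJ; rewrite /kappa (negbTE (bnA j jJ)).
  rewrite (big_pred1 j) // => i /=; apply/andP/eqP => [[iJ /eqP bij]|->].
    exact: binj.
  by split => //; rewrite eqxx.
exists (b @: J); split.
  by move=> c' /imsetP [j jJ ->]; case: (bprops j jJ).
apply: (@mi_of_dep R E _ _ kappa).
- by case/set0Pn: A0 => a aA; apply/set0Pn; exists a; rewrite inE aA.
- move=> c' /setUP [cA|/imsetP [j jJ ->]]; first by rewrite /kappa cA lpos.
  by rewrite kb //; case: (bprops j jJ).
- move=> e; rewrite Hdec.
  have -> : \sum_(a in A) kappa a * h a e = w e.
    by apply: eq_bigr => a aA; rewrite /kappa aA.
  have -> : \sum_(j in J) kappa (b j) * h (b j) e = \sum_(j in J) m j * h (b j) e.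
    by apply: eq_bigr => j jJ; rewrite kb.
  exact: Dz.
- move=> nu Hnu.
  have [t Ht] : exists t, forall a, a \in A -> nu a = t * lam a.
    by apply: luniq => e eF; have := Hnu e; rewrite Hdec colF // addr0.
  exists t => c' /setUP [cA|/imsetP [j jJ ->]]; first by rewrite /kappa cA Ht.
  rewrite kb //.
  have [C1 S1 mpos Hm] := bprops j jJ.
  have jsupp : j \in supp (b j) by rewrite S1 !inE eqxx !orbT.
  have hnz := hat_nz C1 jsupp.
  have E1 := Hnu j; rewrite Hdec colJ // in E1.
  have E2 := Dz j; rewrite /D colJ // in E2.
  have Hw : \sum_(a in A) nu a * h a j = t * w j.
    rewrite /w mulr_sumr; apply: eq_bigr => a aA; by rewrite Ht // mulrA.
  rewrite Hw in E1.
  have e2 : m j * h (b j) j = - w j.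
    by apply/eqP; rewrite -addr_eq0 addrC; apply/eqP.
  have e1 : nu (b j) * h (b j) j = - (t * w j).
    by apply/eqP; rewrite -addr_eq0 addrC; apply/eqP.
  have : (nu (b j) - t * m j) * h (b j) j = 0.
    by rewrite mulrBl e1 -mulrA e2 mulrN subrr.
  by move/eqP; rewrite mulf_eq0 (negbTE hnz) orbF subr_eq0 => /eqP.
Qed.
End Hat.

Theorem mainTheorem13 (R : realType) (V E : finType) (src tgt : E -> V)
  (prec : rel E) (A : {set sset E}) :
  twisted_graph src tgt prec A ->
  strictly_simplicial R prec A ->
  forall theta : E -> R, respects prec theta ->
  exists B : {set sset E},
    (forall b, b \in B -> circuit_po prec b) /\
    minimal_insoluble (A :|: B) (hat prec theta).
Proof.
move=> [_ [_ [sp [_ [Acirc _]]]]] [F [Hsimp Htot]] theta resp.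
exact: (main_aux sp resp Acirc (Hsimp theta resp) Htot).
Qed.
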